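(* Let $x_0\in\mathbb{R}^2$, $r_0>0$, and let $K$ be a relatively closed subset of $B(x_0,r_0)$ that contains $x_0$. Let $\varepsilon>0$. If $E$ is a relatively closed subset of $B(x_0,r_0)$ such that $K\subset E$, $E$ separates $B(x_0,r_0)$, $$\beta_E(x_0,r_0)\le\varepsilon\quad\text{and}\quad r_0^{-1}\mathcal{H}^1(E\setminus K)\le\varepsilon,$$ then $\beta^{\rm bil}_K(x_0,r_0)\le4\varepsilon$.
   Context: $B(x,r)$ is the open ball. For a set $F$ with $x_0\in F$: $\beta_F(x_0,r_0)=r_0^{-1}\inf_\ell\sup_{y\in F\cap B(x_0,r_0)}\mathrm{dist}(y,\ell)$ and $\beta^{\rm bil}_F(x_0,r_0)=r_0^{-1}\inf_\ell\max\{\sup_{y\in F\cap B(x_0,r_0)}\mathrm{dist}(y,\ell),\sup_{y\in\ell\cap B(x_0,r_0)}\mathrm{dist}(y,F)\}$, infima over lines $\ell$ through $x_0$. With $\nu$ a unit normal of a line attaining the infimum in $\beta_F(x_0,r_0)$ and $D^\pm_t=\{z\in B(x_0,r_0):\pm(z-x_0)\cdot\nu>t\}$, $F$ separates $B(x_0,r_0)$ if $\beta:=\beta_F(x_0,r_0)\le1/2$ and $D^+_{\beta r_0}$, $D^-_{\beta r_0}$ lie in distinct connected components of $B(x_0,r_0)\setminus F$. *)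

(* Defs.v *)
From HB Require Import structures.
From mathcomp Require Import all_boot all_order all_algebra.
From mathcomp Require Import all_classical all_reals all_analysis.
Set Implicit Arguments. Unset Strict Implicit. Unset Printing Implicit Defensive.
Import Order.TTheory GRing.Theory Num.Theory.
Import numFieldNormedType.Exports.
Local Open Scope classical_set_scope.
Local Open Scope ring_scope.

Section Plane.
Variable R : realType.
Notation P := (R * R)%type.

Definition edist (p q : P) : R :=
  Num.sqrt ((p.1 - q.1) ^+ 2 + (p.2 - q.2) ^+ 2).

Definition dotd (p x0 v : P) : R := (p.1 - x0.1) * v.1 + (p.2 - x0.2) * v.2.

Definition oball (x : P) (r : R) : set P := [set p | edist x p < r].

Definition dist_set (y : P) (S : set P) : R := inf [set edist y z | z in S].

Definition line (x0 u : P) : set P :=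
  [set p | exists t : R, p = (x0.1 + t * u.1, x0.2 + t * u.2)].

Definition one_sided_dev (F : set P) (x0 : P) (r0 : R) (u : P) : R :=
  sup [set dist_set y (line x0 u) | y in F `&` oball x0 r0].

Definition bil_dev (F : set P) (x0 : P) (r0 : R) (u : P) : R :=
  Num.max (one_sided_dev F x0 r0 u)
          (sup [set dist_set y F | y in line x0 u `&` oball x0 r0]).

(* lines through x0 are indexed by nonzero direction vectors u *)
Definition beta (F : set P) (x0 : P) (r0 : R) : R :=
  r0^-1 * inf [set one_sided_dev F x0 r0 u | u in [set u : P | u != 0]].

Definition beta_bil (F : set P) (x0 : P) (r0 : R) : R :=
  r0^-1 * inf [set bil_dev F x0 r0 u | u in [set u : P | u != 0]].

Definition separates (F : set P) (x0 : P) (r0 : R) : Prop :=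
  let b := beta F x0 r0 in
  b <= 2^-1 /\
  exists u nu : P,
    [/\ u != 0,
        one_sided_dev F x0 r0 u = inf [set one_sided_dev F x0 r0 w | w in [set w : P | w != 0]],
        nu.1 ^+ 2 + nu.2 ^+ 2 = 1,
        nu.1 * u.1 + nu.2 * u.2 = 0 &
        (* D^+_{b r0} and D^-_{b r0} lie in distinct connected components
           of B(x0,r0) \ F *)
        let Dp := [set z | oball x0 r0 z /\ dotd z x0 nu > b * r0] in
        let Dm := [set z | oball x0 r0 z /\ - dotd z x0 nu > b * r0] in
        ~ (exists C : set P, [/\ C `<=` oball x0 r0 `\` F, connected C,
                                 C `&` Dp !=set0 & C `&` Dm !=set0])].

Definition rel_closed (K U : set P) : Prop :=
  exists C : set P, closed C /\ K = C `&` U.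

(* diameter (0 for the empty set, +oo for unbounded sets) *)
Definition ediam (S : set P) : \bar R :=
  ereal_sup ([set 0%E] `|` [set (edist p q)%:E | p in S & q in S]).

(* 1-dimensional Hausdorff measure (unnormalized = length in R^2) *)
Definition hausdorff_content1 (d : R) (A : set P) : \bar R :=
  ereal_inf [set (\sum_(0 <= i <oo) ediam (C i))%E |
             C in [set C : nat -> set P |
                   A `<=` \bigcup_i C i /\ forall i, (ediam (C i) <= d%:E)%E]].

Definition H1 (A : set P) : \bar R :=
  ereal_sup [set hausdorff_content1 d A | d in [set d : R | 0 < d]].

End Plane.

(* Main.v *)
Require Import Defs.
From HB Require Import structures.
From mathcomp Require Import all_boot all_order all_algebra.
From mathcomp Require Import all_classical all_reals all_analysis.
From mathcomp Require Import ring lra.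
Import Order.TTheory GRing.Theory Num.Theory.
Import numFieldNormedType.Exports.
Local Open Scope classical_set_scope.
Local Open Scope ring_scope.
Set Implicit Arguments. Unset Strict Implicit.
Notation ed := Defs.edist.
Section S.
Variable R : realType.
Lemma sup_le_c (A : set R) c : (forall x, A x -> x <= c) -> 0 <= c -> sup A <= c.
Proof.
move=> H c0; case: (pselect (A !=set0)) => [nA|nA].
  by apply: ge_sup.
have -> : A = set0 by apply/seteqP; split=> x // Ax; apply: nA; exists x.
by rewrite sup0.
Qed.
Lemma sup_ge0 (A : set R) : (forall x, A x -> 0 <= x) -> 0 <= sup A.
Proof.
move=> H; case: (pselect (has_sup A)) => [[[a Aa] ub]|nh]; last by rewrite sup_out.
by apply: (le_trans (H a Aa)); apply: ub_le_sup.
Qed.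
Lemma inf_ge0 (A : set R) : (forall x, A x -> 0 <= x) -> 0 <= inf A.
Proof.
move=> H; case: (pselect (A !=set0)) => [nA|nA].
  by apply: lb_le_inf.
have -> : A = set0 by apply/seteqP; split=> x // Ax; apply: nA; exists x.
by rewrite inf0.
Qed.
Lemma inf_le_x (A : set R) x : (forall y, A y -> 0 <= y) -> A x -> inf A <= x.
Proof. by move=> H Ax; apply: ge_inf => //; exists 0. Qed.
Lemma le_sup_x (A : set R) x c : (forall y, A y -> y <= c) -> A x -> x <= sup A.
Proof. by move=> H Ax; apply: ub_le_sup => //; exists c. Qed.

Notation P := (R * R)%type.
Lemma edist_ge0 (p q : P) : 0 <= ed p q.
Proof. exact: sqrtr_ge0. Qed.
Lemma edistC (p q : P) : ed p q = ed q p.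
Proof. by rewrite /Defs.edist; congr Num.sqrt; ring. Qed.
Lemma dist_set_ge0 y (S : set P) : 0 <= dist_set y S.
Proof. by apply: inf_ge0 => _ [z _ <-]; exact: edist_ge0. Qed.
Lemma dist_set_le y (S : set P) z : S z -> dist_set y S <= ed y z.
Proof. by move=> Sz; apply: inf_le_x; [move=> _ [w _ <-]; exact: edist_ge0| exists z]. Qed.
End S.
Section T.
Variable R : realType.
Notation P := (R * R)%type.
Local Open Scope ereal_scope.
Lemma ediam_ge0 (C : set P) : 0 <= ediam C.
Proof. by apply: ereal_sup_ubound; left. Qed.
Lemma ediam_le (C : set P) p q : C p -> C q -> (ed p q)%:E <= ediam C.
Proof. by move=> Cp Cq; apply: ereal_sup_ubound; right; exists p => //; exists q. Qed.

Lemma H1_proj (f : P -> R) (A : set P) (c d : R) :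
  (forall p q, (`|f p - f q| <= ed p q)%R) -> (c < d)%R -> `[c, d]%classic `<=` f @` A ->
  (d - c)%:E <= H1 A.
Proof.
move=> Lf cd cdA.
apply: (@le_trans _ _ (hausdorff_content1 1 A)); last first.
  by apply: ereal_sup_ubound; exists 1%R => //=; rewrite ltr01.
apply: le_ereal_inf_tmp => _ [C [AC Cd] <-].
pose mi i := inf (f @` C i).
pose I i : set R := match ediam (C i) with r%:E => `[mi i, (mi i + r)%R]%classic | _ => setT end.
have Im i : measurable (I i : set (measurableTypeR R)).
  by rewrite /I; case: (ediam (C i)) => [r| |]; [exact: measurable_itv|exact: measurableT|exact: measurableT].
have cdI : `[c, d]%classic `<=` \bigcup_i I i.
  move=> t /cdA [p Ap <-]; have [i _ Cip] := AC p Ap; exists i => //.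
  rewrite /I; case E : (ediam (C i)) => [r| |] //.
    have le q : C i q -> (`|f p - f q| <= r)%R.
      move=> Ciq; apply: (le_trans (Lf p q)); rewrite -lee_fin -E; exact: ediam_le.
    rewrite /= in_itv /=; apply/andP; split.
      apply: ge_inf; last by exists p.
      exists (f p - r)%R => _ [q Ciq <-]; have := le q Ciq; rewrite ler_norml; lra.
    rewrite -lerBlDr; apply: lb_le_inf; first by exists (f p), p.
    move=> _ [q Ciq <-]; have := le q Ciq; rewrite ler_norml; lra.
have h1 := @measure_sigma_subadditive _ _ (measurableTypeR R) (@lebesgue_measure R) _ _ Im (measurable_itv `[c, d]) cdI.
have L := lebesgue_measure_itv `[c, d]; rewrite /= lte_fin cd in L.
apply: (@le_trans _ _ (\sum_(0 <= n <oo) (@lebesgue_measure R (I n)))).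
  by rewrite EFinB -L; exact: h1.
apply: lee_nneseries; first by move=> i _ _; exact: measure_ge0.
move=> i _; rewrite /I; case E : (ediam (C i)) => [r| |] //.
  rewrite lebesgue_measure_itv /=; case: ifP => _; last by rewrite -E ediam_ge0.
  by rewrite lee_fin; lra.
  exact: leey.
by have := ediam_ge0 (C i); rewrite E.
Qed.
End T.
Section U.
Variable R : realType.
Notation P := (R * R)%type.
Lemma seg_connected (a b : P) (h : R) :
  connected ((fun t : R => (a.1 + t * b.1, a.2 + t * b.2)) @` `[-h, h]%classic).
Proof.
apply: connected_continuous_connected; first exact: segment_connected.
apply: continuous_subspaceT => t.
have c1 : (a.1 + t0 * b.1) @[t0 --> t] --> (a.1 + t * b.1).
  apply: cvgD; first exact: cvg_cst.
  by apply: cvgMl; exact: cvg_id.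
have c2 : (a.2 + t0 * b.2) @[t0 --> t] --> (a.2 + t * b.2).
  apply: cvgD; first exact: cvg_cst.
  by apply: cvgMl; exact: cvg_id.
exact: (cvg_pair c1 c2).
Qed.
End U.
Section G.
Variable R : realType.
Notation P := (R * R)%type.
Implicit Types (n : P) (s : R).
Definition wv (n : P) (s : R) : P := (- s * n.2, s * n.1).

Lemma orth_id n s v1 v2 : n.1 ^+ 2 + n.2 ^+ 2 = 1 -> s ^+ 2 = 1 ->
  (v1 * (wv n s).1 + v2 * (wv n s).2) ^+ 2 + (v1 * n.1 + v2 * n.2) ^+ 2 = v1 ^+ 2 + v2 ^+ 2.
Proof.
move=> hn hs; rewrite /wv /=.
transitivity ((v1 ^+ 2 + v2 ^+ 2) * (n.1 ^+ 2 + n.2 ^+ 2) + (s ^+ 2 - 1) * (v2 * n.1 - v1 * n.2) ^+ 2).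
  by ring.
by rewrite hn hs subrr mul0r addr0 mulr1.
Qed.

Lemma edist_coord (x0 : P) n s (p q : P) : n.1 ^+ 2 + n.2 ^+ 2 = 1 -> s ^+ 2 = 1 ->
  ed p q = Num.sqrt ((dotd p x0 (wv n s) - dotd q x0 (wv n s)) ^+ 2
                      + (dotd p x0 n - dotd q x0 n) ^+ 2).
Proof.
move=> hn hs; rewrite /Defs.edist; congr Num.sqrt.
rewrite -(orth_id (p.1 - q.1) (p.2 - q.2) hn hs) /dotd; ring.
Qed.

Lemma dotd_self (x0 v : P) : dotd x0 x0 v = 0.
Proof. by rewrite /dotd !subrr !mul0r addr0. Qed.

Definition qf (x0 n : P) s0 s t : P :=
  ((x0.1 + s * (wv n s0).1) + t * n.1, (x0.2 + s * (wv n s0).2) + t * n.2).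

Lemma dotd_qf_w x0 n s0 s t : n.1 ^+ 2 + n.2 ^+ 2 = 1 -> s0 ^+ 2 = 1 ->
  dotd (qf x0 n s0 s t) x0 (wv n s0) = s.
Proof.
move=> hn hs; rewrite /dotd /qf /wv /=.
transitivity (s * s0 ^+ 2 * (n.1 ^+ 2 + n.2 ^+ 2)); first by ring.
by rewrite hn hs !mulr1.
Qed.

Lemma dotd_qf_n x0 n s0 s t : n.1 ^+ 2 + n.2 ^+ 2 = 1 ->
  dotd (qf x0 n s0 s t) x0 n = t.
Proof.
move=> hn; rewrite /dotd /qf /wv /=.
transitivity (t * (n.1 ^+ 2 + n.2 ^+ 2)); first by ring.
by rewrite hn mulr1.
Qed.

Lemma abs_le_sqrt (a b : R) : `|a| <= Num.sqrt (a ^+ 2 + b ^+ 2).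
Proof.
rewrite -sqrtr_sqr ler_sqrt; last by rewrite addr_ge0 // sqr_ge0.
by rewrite lerDl sqr_ge0.
Qed.
End G.
Section Key.
Variable R : realType.
Notation P := (R * R)%type.

Lemma key (x0 : P) (r0 eps b : R) (K E : set P) (n : P) (s0 : R) (y : P) :
  0 < r0 -> 0 < eps -> eps < 4^-1 -> K `<=` E -> b <= eps ->
  n.1 ^+ 2 + n.2 ^+ 2 = 1 -> s0 ^+ 2 = 1 ->
  ~ (exists C : set P, [/\ C `<=` oball x0 r0 `\` E, connected C,
        C `&` [set z | oball x0 r0 z /\ dotd z x0 n > b * r0] !=set0 &
        C `&` [set z | oball x0 r0 z /\ - dotd z x0 n > b * r0] !=set0]) ->
  ((r0^-1)%:E * H1 (E `\` K) <= eps%:E)%E ->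
  oball x0 r0 y -> dotd y x0 n = 0 -> 0 <= dotd y x0 (wv n s0) ->
  exists2 z, K z & ed y z <= 4 * eps * r0.
Proof.
move=> r0p ep e4 KE be hn hs nsep hH yb yn ya.
set w := wv n s0.
set a := fun p => dotd p x0 w.
set al := a y.
have Lip p q : `|a p - a q| <= ed p q.
  by rewrite (edist_coord x0 p q hn hs); exact: abs_le_sqrt.
have alr : al < r0.
  have := yb; rewrite /oball /= (edist_coord x0 x0 y hn hs) !dotd_self yn.
  rewrite subrr expr0n /= addr0 sqrtr_sqr sub0r normrN => h.
  exact: le_lt_trans (ler_norm _) h.
have [s /andP[s1 s2] ns] : exists2 s, (al - 5/2 * eps * r0 <= s <= al - eps * r0)
      & ~ (a @` (E `\` K)) s.
  apply: contrapT => hne.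
  have sub : `[al - 5/2 * eps * r0, al - eps * r0]%classic `<=` a @` (E `\` K).
    move=> t; rewrite /= in_itv /= => ht; apply: contrapT => nt; apply: hne; by exists t.
  have lt : al - 5/2 * eps * r0 < al - eps * r0.
    by have := mulr_gt0 ep r0p; lra.
  have := H1_proj Lip lt sub.
  move: hH; case: (H1 (E `\` K)) => [x| |] //=.
    rewrite -EFinM !lee_fin => h1 h2.
    have : r0 * (r0^-1 * x) <= r0 * eps by rewrite ler_wpM2l // ltW.
    rewrite mulrA mulfV ?gt_eqF // mul1r.
    by have := mulr_gt0 ep r0p; lra.
  by rewrite mulry gtr0_sg ?invr_gt0 // mul1e leye_eq.
pose h := 3/2 * eps * r0.
pose q := qf x0 n s0 s.
have qw t : a (q t) = s by exact: dotd_qf_w.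
have qn t : dotd (q t) x0 n = t by exact: dotd_qf_n.
have er := mulr_gt0 ep r0p.
have e4r : eps * r0 < 4^-1 * r0 by rewrite ltr_pM2r.
have al0 : 0 <= al by [].
have qball t : t ^+ 2 <= h ^+ 2 -> oball x0 r0 (q t).
  move=> th; rewrite /oball /= (edist_coord x0 x0 (q t) hn hs) !dotd_self.
  rewrite -/w -/(a (q t)) qw qn !sub0r !sqrrN.
  rewrite -[X in _ < X](gtr0_norm r0p) -sqrtr_sqr ltr_sqrt ?exprn_gt0 //.
  set m := r0 - eps * r0.
  have sm1 : s <= m by rewrite /m; lra.
  have sm2 : - m <= s by rewrite /m; lra.
  have s2m : s ^+ 2 <= m ^+ 2.
    have : 0 <= (m - s) * (m + s) by apply: mulr_ge0; lra.
    by move=> hh; nra.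
  have : m ^+ 2 + h ^+ 2 < r0 ^+ 2.
    rewrite /m /h.
    have hh : 0 < r0 ^+ 2 * eps * (2 - 13/4 * eps).
      by apply: mulr_gt0; [apply: mulr_gt0; [exact: exprn_gt0 r0p|] | lra].
    by nra.
  lra.
have [t /andP[t1 t2] Eq] : exists2 t, (- h <= t <= h) & E (q t).
  apply: contrapT => hne; apply: nsep.
  exists (q @` `[- h, h]%classic); split.
  - move=> _ [t ht <-]; split.
      apply: qball; move: ht; rewrite /= in_itv /= => /andP[ht1 ht2].
      have : 0 <= (h - t) * (h + t) by apply: mulr_ge0; lra.
      by move=> hh; nra.
    by move=> Et; apply: hne; exists t.
  - exact: (@seg_connected R (x0.1 + s * (wv n s0).1, x0.2 + s * (wv n s0).2) n h).
  - exists (q h); split; first by exists h => //=; rewrite in_itv /=; apply/andP; split; rewrite /h; lra.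
    split; first by apply: qball.
    rewrite qn /h; have : b * r0 <= eps * r0 by rewrite ler_pM2r.
    lra.
  - exists (q (- h)); split; first by exists (- h) => //=; rewrite in_itv /=; apply/andP; split; rewrite /h; lra.
    split; first by apply: qball; rewrite sqrrN.
    rewrite qn opprK /h; have : b * r0 <= eps * r0 by rewrite ler_pM2r.
    lra.
have Kq : K (q t).
  apply: contrapT => nK; apply: ns; exists (q t) => //.
exists (q t) => //.
rewrite (edist_coord x0 y (q t) hn hs) -/w -/(a y) -/(a (q t)) qw qn yn -/al.
have p4 : 0 < 4 * eps * r0 by rewrite -mulrA; apply: mulr_gt0.
rewrite -[X in _ <= X](gtr0_norm p4) -sqrtr_sqr ler_sqrt; last by rewrite sqr_ge0.
have : 0 <= (h - t) * (h + t) by apply: mulr_ge0; lra.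
have : 0 <= (al - s - eps * r0) * (5/2 * eps * r0 - (al - s)) by apply: mulr_ge0; lra.
rewrite /h; move=> h1 h2; nra.
Qed.
End Key.
Theorem lemma4p16 (R : realType) (x0 : R * R) (r0 eps : R)
    (K E : set (R * R)) :
  0 < r0 ->
  rel_closed K (oball x0 r0) -> K x0 ->
  0 < eps ->
  rel_closed E (oball x0 r0) ->
  K `<=` E ->
  separates E x0 r0 ->
  beta E x0 r0 <= eps ->
  ((r0^-1)%:E * H1 (E `\` K) <= eps%:E)%E ->
  beta_bil K x0 r0 <= 4 * eps.
Proof.
move=> r0p _ Kx0 ep _ KE [_ [u [nu [u0 uopt hn hnu hsep]]]] hbe hH.
have x0l : line x0 u x0 by exists 0; rewrite !mul0r !addr0; case: x0 {Kx0 hsep uopt hH hbe}.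
have dl y : dist_set y (line x0 u) <= ed y x0 by exact: dist_set_le.
have x0b : oball x0 r0 x0 by rewrite /oball /= /Defs.edist !subrr expr0n /= addr0 sqrtr0.
have osdE : one_sided_dev E x0 r0 u = r0 * beta E x0 r0.
  by rewrite /beta mulrA mulfV ?gt_eqF // mul1r.
have er := mulr_gt0 ep r0p.
have osdK : one_sided_dev K x0 r0 u <= eps * r0.
  apply: (@le_trans _ _ (one_sided_dev E x0 r0 u)); last first.
    by rewrite osdE mulrC ler_pM2r.
  apply: sup_le_c.
    move=> _ [y [Ky yb] <-]; apply: (@le_sup_x _ _ _ r0).
      move=> _ [z [_ zb] <-]; apply: (le_trans (dl z)); rewrite edistC; exact: ltW.
    by exists y => //; split => //; apply: KE.
  by apply: sup_ge0 => _ [y _ <-]; exact: dist_set_ge0.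
have dK y : line x0 u y -> oball x0 r0 y -> dist_set y K <= 4 * eps * r0.
  move=> [t ->] yb.
  have [e4|e4] := leP (4^-1) eps.
    apply: (le_trans (dist_set_le _ Kx0)); rewrite edistC.
    apply: (le_trans (ltW yb)).
    by rewrite -[X in X <= _]mul1r ler_pM2r //; lra.
  have yn : dotd (x0.1 + t * u.1, x0.2 + t * u.2) x0 nu = 0.
    rewrite /dotd /=; transitivity (t * (nu.1 * u.1 + nu.2 * u.2)); first by ring.
    by rewrite hnu mulr0.
  have h1s : (1 : R) ^+ 2 = 1 by rewrite expr1n.
  have hm1 : (-1 : R) ^+ 2 = 1 by rewrite sqrrN expr1n.
  have [ya|ya] := leP 0 (dotd (x0.1 + t * u.1, x0.2 + t * u.2) x0 (wv nu 1)).
    have [z Kz dz] := key r0p ep e4 KE hbe hn h1s hsep hH yb yn ya.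
    exact: le_trans (dist_set_le _ Kz) dz.
  have ya' : 0 <= dotd (x0.1 + t * u.1, x0.2 + t * u.2) x0 (wv nu (-1)).
    move: ya; rewrite /dotd /wv /=; lra.
  have [z Kz dz] := key r0p ep e4 KE hbe hn hm1 hsep hH yb yn ya'.
  exact: le_trans (dist_set_le _ Kz) dz.
have bK : bil_dev K x0 r0 u <= 4 * eps * r0.
  rewrite /bil_dev ge_max; apply/andP; split.
    apply: (le_trans osdK); rewrite ler_pM2r //; lra.
  apply: sup_le_c; first by move=> _ [y [ly yb] <-]; exact: dK.
  by rewrite -mulrA; apply: mulr_ge0 => //; lra.
rewrite /beta_bil.
apply: (@le_trans _ _ (r0^-1 * bil_dev K x0 r0 u)).
  rewrite ler_pM2l ?invr_gt0 //; apply: inf_le_x; last by exists u.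
  move=> _ [v _ <-]; rewrite /bil_dev le_max; apply/orP; right.
  by apply: sup_ge0 => _ [y _ <-]; exact: dist_set_ge0.
rewrite -(ler_pM2l r0p) mulrA mulfV ?gt_eqF // mul1r.
by rewrite mulrC.
Qed.
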